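(* Let $K$ be a metrizable, locally connected, compact Hausdorff space. Then for every pairwise disjoint sequence $(f_n)_{n\in\mathbb{N}}$ in $C_1(K)$, the extension $K((f_n)_{n\in\mathbb{N}})$ is a strong extension.
   Context: All spaces are Hausdorff. For a compact space $K$, $C_1(K)$ denotes the set of continuous functions $K\to[0,1]$; $f,g$ are disjoint if $f\cdot g=0$. For a real function $f$ on $K$, $supp(f)$ is the closure of $\{x\in K: f(x)\neq 0\}$. For a pairwise disjoint sequence $(f_n)_{n\in\mathbb{N}}$ in $C_1(K)$, let $D((f_n)_{n\in\mathbb{N}})$ be the union of all open sets $U\subseteq K$ such that $\{n: U\cap supp(f_n)\neq\emptyset\}$ is finite. The extension of $K$ by $(f_n)_{n\in\mathbb{N}}$, denoted $K((f_n)_{n\in\mathbb{N}})$, is the closure in $K\times[0,1]$ of the graph of the function $\sum_{n\in\mathbb{N}} f_n$ restricted to $D((f_n)_{n\in\mathbb{N}})$. The extension is called strong if it contains the graph of $\sum_{n\in\mathbb{N}} f_n$ on all of $K$. A space is locally connected if it has a basis of connected open sets. *)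

(* Defs.v *)
From HB Require Import structures.
From mathcomp Require Import all_boot all_order all_algebra.
From mathcomp Require Import all_classical all_reals all_analysis.
Set Implicit Arguments. Unset Strict Implicit. Unset Printing Implicit Defensive.
Import Order.TTheory GRing.Theory Num.Theory.
Import numFieldNormedType.Exports.
Local Open Scope classical_set_scope.
Local Open Scope ring_scope.

Section Ext.
Variables (R : realType) (K : topologicalType).

Definition metrizable_space : Prop :=
  exists d : K -> K -> R,
    [/\ (forall x y, 0 <= d x y),
        (forall x y, d x y = 0 <-> x = y),
        (forall x y, d x y = d y x),
        (forall x y z, d x z <= d x y + d y z) &
        (forall A : set K, open A <->
           (forall x, A x -> exists2 e : R, 0 < e & [set y | d x y < e] `<=` A))].

Definition locally_connected_space : Prop :=
  exists2 B : set (set K), basis B & (forall U, B U -> connected U).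

Definition C1 (f : K -> R) : Prop :=
  continuous f /\ (forall x, 0 <= f x <= 1).

Definition fdisjoint (f g : K -> R) : Prop := forall x, f x * g x = 0.

Definition supp (f : K -> R) : set K := closure [set x | f x != 0].

Definition Dset (fs : nat -> K -> R) : set K :=
  \bigcup_(U in [set U : set K | open U /\
      finite_set [set n : nat | U `&` supp (fs n) !=set0]]) U.

Definition fsum (fs : nat -> K -> R) (x : K) : R :=
  limn (series (fun n => fs n x)).

(* K((f_n)_n): closure in K x R (equivalently in K x [0,1], which is closed
   in K x R and contains the graph) of the graph of fsum restricted to D *)
Definition extension (fs : nat -> K -> R) : set (K * R) :=
  closure [set p : K * R | Dset fs p.1 /\ p.2 = fsum fs p.1].

Definition strong_extension (fs : nat -> K -> R) : Prop :=
  [set p : K * R | p.2 = fsum fs p.1] `<=` extension fs.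

End Ext.

(* Main.v *)
Require Import Defs.
From HB Require Import structures.
From mathcomp Require Import all_boot all_order all_algebra.
From mathcomp Require Import all_classical all_reals all_analysis.
Import Order.TTheory GRing.Theory Num.Theory.
Import numFieldNormedType.Exports.
Local Open Scope classical_set_scope.
Local Open Scope ring_scope.

Section Aux.
Variables (R : realType) (K : topologicalType).

Lemma series_one (u : nat -> R) k :
  (forall i, i <> k -> u i = 0) ->
  forall n, series u n = if (k < n)%N then u k else 0.
Proof.
move=> hu; elim=> [|n IH].
  by rewrite /series /= big_geq.
have -> : series u n.+1 = series u n + u n by rewrite /series /= big_nat_recr.
rewrite IH.
case: (ltngtP k n) => [kn|nk|->].
- have -> : (k < n.+1)%N by rewrite ltnS ltnW.
  rewrite (hu n) ?addr0 // => e; by rewrite e ltnn in kn.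
- have -> : (k < n.+1)%N = false by rewrite ltnS leqNgt nk.
  rewrite (hu n) ?addr0 // => e; by rewrite e ltnn in nk.
- by rewrite ltnSn add0r.
Qed.

Lemma series_zero (u : nat -> R) :
  (forall i, u i = 0) -> forall n, series u n = 0.
Proof.
move=> hu n; rewrite /series /= big1 // => i _; exact: hu.
Qed.

Variable fs : nat -> K -> R.
Hypothesis hC1 : forall n, C1 (fs n).
Hypothesis hdisj : forall n m, n <> m -> fdisjoint (fs n) (fs m).

Lemma fsum_one x k : fs k x != 0 -> fsum fs x = fs k x.
Proof.
move=> hk.
have hu : forall i, i <> k -> fs i x = 0.
  move=> i ik; have := hdisj _ _ ik x; move/eqP; rewrite mulf_eq0 (negbTE hk) orbF.
  by move/eqP.
rewrite /fsum; apply: (lim_near_cst (@Rhausdorff R)).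
exists k.+1 => // n /= hn; rewrite (series_one _ _ hu) //.
by rewrite hn.
Qed.

Lemma fsum_zero x : (forall k, fs k x = 0) -> fsum fs x = 0.
Proof.
move=> hk; rewrite /fsum; apply: (lim_near_cst (@Rhausdorff R)).
by apply: nearW => n; rewrite (series_zero _ hk).
Qed.

Lemma pos_in_D y n : fs n y != 0 -> Dset fs y.
Proof.
move=> hn.
have pos : 0 < fs n y by rewrite lt0r hn; case: (hC1 n) => _ /(_ y) /andP[].
exists (fs n @^-1` [set r | 0 < r]) => //; split.
  apply: open_comp; last exact: open_gt.
  by move=> z _; case: (hC1 n) => c _; exact: c.
apply: (@sub_finite_set _ _ [set n]); last exact: finite_set1.
move=> m /= [z [zpos zsupp]].
apply/eqP/negPn/negP => mn.
have [w [wm wn]] := zsupp _ (open_nbhs_nbhs (conj (open_comp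
  (fun z _ => (hC1 n).1 z) (@open_gt R 0)) zpos)).
have mn' : m <> n by move=> e; rewrite e eqxx in mn.
have := hdisj _ _ mn' w.
move=> /eqP; rewrite mulf_eq0 (negbTE wm) /=.
by rewrite gt_eqF.
Qed.

End Aux.

Theorem theorem3p1 (R : realType) (K : topologicalType)
  (hK : hausdorff_space K) (cK : compact [set: K])
  (mK : metrizable_space R K) (lK : locally_connected_space K)
  (fs : nat -> K -> R)
  (hC1 : forall n, C1 (fs n))
  (hdisj : forall n m, n <> m -> fdisjoint (fs n) (fs m)) :
  strong_extension fs.
Proof.
rewrite /strong_extension /extension => -[x s] /= -> W nW.
have [Dx|nDx] := pselect (Dset fs x).
  by exists (x, fsum fs x); split => //; exact: nbhs_singleton nW.
have zx : forall k, fs k x = 0.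
  move=> k; apply/eqP/negP => /negP hk; apply: nDx; exact: (pos_in_D _ _ _ hC1 hdisj _ _ hk).
rewrite (fsum_zero _ _ _ _ zx) in nW *.
case: nW => [[A B]] /= [nA nB] sAB.
have [e e0 sB] := (nbhs_ballP _ _).1 nB.
case: lK => Bs [Bopen Bcvg] Bconn.
have [V [BV Vx] VA] := Bcvg x _ nA.
have oV : open V by exact: Bopen.
have nfin : ~ finite_set [set n | V `&` supp (fs n) !=set0].
  by move=> fin; apply: nDx; exists V.
have [n [z [Vz zsupp]]] : exists n, V `&` supp (fs n) !=set0.
  apply: contrapT => h; apply: nfin.
  rewrite (_ : [set n | _] = set0); first exact: finite_set0.
  by apply/seteqP; split => // m /= hm; apply: h; exists m.
have [y0 [fy0 Vy0]] := zsupp V (open_nbhs_nbhs (conj oV Vz)).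
have py0 : 0 < fs n y0.
  by rewrite lt0r fy0; case: (hC1 n) => _ /(_ y0) /andP[].
set t := Num.min (fs n y0) (e / 2).
have t0 : 0 < t by rewrite lt_min py0 divr_gt0.
have te : t < e by rewrite gt_min ltr_pdivrMr // ltr_pMr // ltr1n orbT.
have ci := connected_continuous_connected (Bconn _ BV)
  (continuous_subspaceT (hC1 n).1).
move/connected_intervalP: ci => ci.
have : (fs n @` V) t.
  apply: (ci _ _ (ex_intro2 _ _ x Vx (zx n)) (ex_intro2 _ _ y0 Vy0 erefl) t).
  by rewrite (ltW t0) /t ge_min lexx.
move=> [y Vy fyt].
have fyn : fs n y != 0 by rewrite fyt gt_eqF.
exists (y, t); split => /=.
  split; first exact: (pos_in_D _ _ _ hC1 hdisj _ _ fyn).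
  by rewrite (fsum_one _ _ _ hdisj _ _ fyn).
apply: sAB; split => /=; first exact: VA.
apply: sB; rewrite /ball /= sub0r normrN ger0_norm //; exact: ltW.
Qed.
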